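(* Let $\alpha\in(0,1)$, $R>0$, $m=\sqrt{1-\alpha^2}/\alpha$, and consider the initial state $(x_O,y_O,y_T)$ at time $0$. Let $D=\{(x,y):(x-x_O)^2+(y-y_O)^2\le R^2\}$ be the observation disk and $\mathrm{DL}=\{(\pm s\alpha,\,y_T+s\sqrt{1-\alpha^2}):s\ge0\}$ the Decision Line. If $D$ lies beneath the Decision Line, i.e. $D\subseteq\{(x,y):y-y_T\le m|x|\}$, and $D\cap\mathrm{DL}$ contains at most one point, then the optimal observation time is $0$ (the state belongs to $\mathscr B_1$).
   Context: Target: position $(0,y_T(t))$, $\dot y_T=1$, $y_T(0)=y_T$. Observer: position $(x_O(t),y_O(t))$ starting at $(x_O,y_O)$, $\dot x_O=\alpha\cos\psi(t)$, $\dot y_O=\alpha\sin\psi(t)$, heading $\psi:[0,\infty)\to\mathbb R$ a measurable control. For a control, $t_2=\inf\{t\ge0:x_O(t)^2+(y_O(t)-y_T(t))^2\le R^2\}$, $t_f=\inf\{t\ge t_2:x_O(t)^2+(y_O(t)-y_T(t))^2>R^2\}$, and $t_{\text{obs}}=t_f-t_2$ (taken to be $0$ if no contact occurs). The optimal observation time is the supremum of $t_{\text{obs}}$ over all controls. The Decision Line is the set of points $Z$ whose Apollonius circle $\{P:|PZ|=\alpha|PT|\}$ with the initial target position $T=(0,y_T)$ is tangent to the target's path $\{(0,y):y\ge y_T\}$, which is the union of the two rays given. $\mathscr B_1$ denotes the set of states with optimal observation time $0$. *)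

(* Defs.v *)
From HB Require Import structures.
From mathcomp Require Import all_boot all_order all_algebra.
From mathcomp Require Import all_classical all_reals all_analysis.
Set Implicit Arguments. Unset Strict Implicit. Unset Printing Implicit Defensive.
Import Order.TTheory GRing.Theory Num.Theory.
Import numFieldNormedType.Exports.
Local Open Scope classical_set_scope.
Local Open Scope ring_scope.

Section Game.
Variable R : realType.

Definition admissible (psi : R -> R) : Prop :=
  measurable_fun (`[0%R, +oo[ : set R) psi.

Definition obs_x (alpha xO : R) (psi : R -> R) (t : R) : R :=
  xO + Rintegral lebesgue_measure `[0%R, t] (fun s => alpha * cos (psi s)).
Definition obs_y (alpha yO : R) (psi : R -> R) (t : R) : R :=
  yO + Rintegral lebesgue_measure `[0%R, t] (fun s => alpha * sin (psi s)).

(* Target position: (0, yT + t). *)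
Definition targ_y (yT t : R) : R := yT + t.

Definition dist2 (alpha xO yO yT : R) (psi : R -> R) (t : R) : R :=
  (obs_x alpha xO psi t) ^+ 2 + (obs_y alpha yO psi t - targ_y yT t) ^+ 2.

Definition t2 (alpha r xO yO yT : R) (psi : R -> R) : \bar R :=
  ereal_inf [set (t%:E)%E | t in [set t : R | 0 <= t /\ dist2 alpha xO yO yT psi t <= r ^+ 2]].

Definition tf (alpha r xO yO yT : R) (psi : R -> R) : \bar R :=
  ereal_inf [set (t%:E)%E | t in [set t : R |
     (t2 alpha r xO yO yT psi <= t%:E)%E /\ r ^+ 2 < dist2 alpha xO yO yT psi t]].

Definition tobs (alpha r xO yO yT : R) (psi : R -> R) : \bar R :=
  if (t2 alpha r xO yO yT psi == +oo)%E then 0%E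
  else (tf alpha r xO yO yT psi - t2 alpha r xO yO yT psi)%E.

Definition optimal_obs_time (alpha r xO yO yT : R) : \bar R :=
  ereal_sup [set tobs alpha r xO yO yT psi | psi in admissible].

Definition obs_disk (r xO yO : R) : set (R * R) :=
  [set p | (p.1 - xO) ^+ 2 + (p.2 - yO) ^+ 2 <= r ^+ 2].

Definition decision_line (alpha yT : R) : set (R * R) :=
  [set p | exists s : R, 0 <= s /\
     (p = (s * alpha, yT + s * Num.sqrt (1 - alpha ^+ 2)) \/
      p = (- (s * alpha), yT + s * Num.sqrt (1 - alpha ^+ 2)))].

Definition below_DL (alpha yT : R) : set (R * R) :=
  [set p | p.2 - yT <= (Num.sqrt (1 - alpha ^+ 2) / alpha) * `|p.1|].

End Game.

(* Main.v *)
Require Import Defs.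
From HB Require Import structures.
From mathcomp Require Import all_boot all_order all_algebra.
From mathcomp Require Import all_classical all_reals all_analysis.
From mathcomp Require Import ring lra.
Import Order.TTheory GRing.Theory Num.Theory.
Import numFieldNormedType.Exports.
Local Open Scope classical_set_scope.
Local Open Scope ring_scope.

Section Aux.
Variable R : realType.
Notation mu := (@lebesgue_measure R).

Lemma hc (k p q : R) : continuous (fun u : R => k + p * cos u + q * sin u).
Proof.
move=> u.
apply: (@continuousD _ _ _ (fun u => k + p * cos u) (fun u => q * sin u)).
  apply: (@continuousD _ _ _ (cst k) (fun u => p * cos u)); first exact: cst_continuous.
  apply: (@continuousM _ _ (cst p) cos); [exact: cst_continuous|exact: continuous_cos].
apply: (@continuousM _ _ (cst q) sin); [exact: cst_continuous|exact: continuous_sin].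
Qed.

Lemma mf (k p q t : R) (psi : R -> R) : measurable_fun (`[0%R, +oo[ : set R) psi ->  0 <= t ->
  measurable_fun (`[0, t] : set R) (fun s => k + p * cos (psi s) + q * sin (psi s)).
Proof.
move=> mpsi t0.
have : measurable_fun (`[0, t] : set R) psi.
  apply: measurable_funS mpsi => //. move=> x /=; rewrite !in_itv /= => /andP[-> _]//.
move=> m2.
apply: (measurableT_comp (f := fun u => k + p * cos u + q * sin u)) => //.
apply: measurable_realfun.continuous_measurable_fun; exact: hc.
Qed.

Lemma muitv (t : R) : 0 <= t -> mu (`[0, t] : set R) = t%:E.
Proof.
move=> t0; rewrite lebesgue_measure_itv /=.
case: ifP; first by rewrite lte_fin => _; rewrite -EFinD subr0.
rewrite lte_fin => /negbT; rewrite -leNgt => h.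
by congr EFin; apply/eqP; rewrite eq_le h t0.
Qed.

Lemma iF (k p q t : R) (psi : R -> R) (f : R -> R) :
  measurable_fun (`[0%R, +oo[ : set R) psi ->  0 <= t ->
  (forall s, f s = k + p * cos (psi s) + q * sin (psi s)) ->
  mu.-integrable (`[0, t] : set R) (EFin \o f).
Proof.
move=> mpsi t0 fE.
have -> : f = (fun s => k + p * cos (psi s) + q * sin (psi s)) by apply/funext.
apply: measurable_bounded_integrable => //.
- have := ltry t; rewrite -(muitv t t0); exact.
- exact: mf.
- rewrite /bounded_near; near=> M => x _ /=.
  rewrite (le_trans (ler_normD _ _)) // (le_trans (lerD (ler_normD _ _) (lexx _))) //.
  rewrite !normrM.
  have h1 := cos_max (psi x); have h2 := sin_max (psi x).
  have : `|k| + `|p| + `|q| <= M.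
    by near: M; apply: nbhs_pinfty_ge; rewrite realE; apply/orP; left; rewrite !addr_ge0.
  have := normr_ge0 p; have := normr_ge0 q; have := normr_ge0 (cos (psi x)); have := normr_ge0 (sin (psi x)).
  nra.
Unshelve. all: end_near.
Qed.

Lemma int_bound (alpha t : R) (psi : R -> R) :
  measurable_fun (`[0%R, +oo[ : set R) psi -> 0 <= alpha -> 0 <= t ->
  (Rintegral mu `[0%R, t] (fun s => alpha * cos (psi s))) ^+ 2 +
  (Rintegral mu `[0%R, t] (fun s => alpha * sin (psi s))) ^+ 2 <= (alpha * t) ^+ 2.
Proof.
move=> mpsi a0 t0.
set A := Rintegral _ _ _. set B := Rintegral _ _ _.
set N := Num.sqrt (A ^+ 2 + B ^+ 2).
have N0 : 0 <= N by apply: sqrtr_ge0.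
have NN : N ^+ 2 = A ^+ 2 + B ^+ 2 by rewrite sqr_sqrtr // addr_ge0 // sqr_ge0.
have eA : A * A = Rintegral mu `[0%R, t] (fun s => A * (alpha * cos (psi s))).
  rewrite RintegralZl //; apply: (@iF 0 alpha 0 t psi _ mpsi t0) => s /=; ring.
have eB : B * B = Rintegral mu `[0%R, t] (fun s => B * (alpha * sin (psi s))).
  rewrite RintegralZl //; apply: (@iF 0 0 alpha t psi _ mpsi t0) => s /=; ring.
have eAB : A * A + B * B = Rintegral mu `[0%R, t] (fun s => A * (alpha * cos (psi s)) + B * (alpha * sin (psi s))).
  rewrite eA eB RintegralD //.
    by apply: (@iF 0 (A * alpha) 0 t psi _ mpsi t0) => s /=; ring.
  by apply: (@iF 0 0 (B * alpha) t psi _ mpsi t0) => s /=; ring.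
have le : A * A + B * B <= Rintegral mu `[0%R, t] (fun s => alpha * N).
  rewrite eAB; apply: le_Rintegral => //.
  - by apply: (@iF 0 (A * alpha) (B * alpha) t psi _ mpsi t0) => s /=; ring.
  - by apply: (@iF (alpha * N) 0 0 t psi _ mpsi t0) => s /=; ring.
  - move=> s _.
    have h := cos2Dsin2 (psi s).
    set c := cos (psi s) in h *; set d := sin (psi s) in h *.
    have hx : (A * c + B * d) ^+ 2 <= N ^+ 2.
      rewrite NN.
      have e : (A * c + B * d) ^+ 2 + (A * d - B * c) ^+ 2 = (A ^+ 2 + B ^+ 2) * (c ^+ 2 + d ^+ 2) by ring.
      rewrite h mulr1 in e; have := sqr_ge0 (A * d - B * c); lra.
    have hx2 : A * c + B * d <= N by nra.
    have : alpha * (A * c + B * d) <= alpha * N by apply: ler_wpM2l.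
    lra.
rewrite Rintegral_cst // in le.
set m := fine _ in le.
have mE : m = t by rewrite /m; exact: (f_equal fine (muitv t t0)).
rewrite mE in le.
have : N ^+ 2 <= alpha * N * t by rewrite NN -!expr2 in le *; lra.
move=> h.
have at0 : 0 <= alpha * t by apply: mulr_ge0.
rewrite -NN. nra.
Qed.
End Aux.

Lemma contact (R : realType) (alpha r xO yO yT : R) :
  0 < alpha < 1 -> 0 < r ->
  obs_disk r xO yO `<=` below_DL alpha yT ->
  forall psi, admissible psi -> forall t, 0 <= t ->
  dist2 alpha xO yO yT psi t <= r ^+ 2 ->
  exists P : R * R, P \in obs_disk r xO yO `&` decision_line alpha yT /\
     P.2 - yT = (1 - alpha ^+ 2) * t.
Proof.
move=> /andP[a0 a1] r0 below psi hpsi t t0.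
have hb : (obs_x alpha xO psi t - xO) ^+ 2 + (obs_y alpha yO psi t - yO) ^+ 2 <= (alpha * t) ^+ 2.
  rewrite /obs_x /obs_y (addrC xO) (addrC yO) !addrK.
  exact: (@int_bound R alpha t psi hpsi (ltW a0) t0).
set a := obs_x alpha xO psi t - xO in hb.
set b := obs_y alpha yO psi t - yO in hb.
have ex : obs_x alpha xO psi t = xO + a by rewrite /a; ring.
have ey : obs_y alpha yO psi t = yO + b by rewrite /b; ring.
rewrite /dist2 ex ey /targ_y.
move=> hd.
set u := `|a|.
have u0 : 0 <= u by apply: normr_ge0.
have uu : u ^+ 2 = a ^+ 2 by rewrite /u real_normK // num_real.
set c := Num.sqrt (1 - alpha ^+ 2).
have c0 : 0 <= c by apply: sqrtr_ge0.
have cc : c ^+ 2 = 1 - alpha ^+ 2 by rewrite /c sqr_sqrtr //; nra.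
have inD : obs_disk r xO yO (- a, yT + t - b).
  rewrite /obs_disk /=.
  have -> : (- a - xO) ^+ 2 + (yT + t - b - yO) ^+ 2 =
            (xO + a) ^+ 2 + (yO + b - (yT + t)) ^+ 2 by ring.
  exact: hd.
have bel := below _ inD.
rewrite /below_DL /= normrN -/c -/u in bel.
have bel2 : alpha * (t - b) <= c * u.
  have -> : c * u = alpha * (c / alpha * u) by field; rewrite gt_eqF.
  apply: ler_wpM2l; first exact: ltW.
  by have -> : t - b = yT + t - b - yT by ring.
have tb : b <= t.
  have : b ^+ 2 <= t ^+ 2.
    have := sqr_ge0 a; rewrite exprMn in hb.
    have : alpha ^+ 2 <= 1 by nra.
    have := sqr_ge0 t. nra.
  nra.
have h1 : (1 - alpha ^+ 2) * a ^+ 2 <= (1 - alpha ^+ 2) * ((alpha * t) ^+ 2 - b ^+ 2).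
  apply: ler_wpM2l; first by nra.
  lra.
have id1 : (alpha * (t - b)) ^+ 2 - (1 - alpha ^+ 2) * ((alpha * t) ^+ 2 - b ^+ 2)
           = (b - alpha ^+ 2 * t) ^+ 2 by ring.
have cu2 : (c * u) ^+ 2 = (1 - alpha ^+ 2) * a ^+ 2 by rewrite exprMn cc uu.
have x0 : 0 <= alpha * (t - b) by apply: mulr_ge0; lra.
have cu0 : 0 <= c * u by apply: mulr_ge0.
have sq : (b - alpha ^+ 2 * t) ^+ 2 <= (alpha * (t - b)) ^+ 2 - (c * u) ^+ 2 by lra.
have hs := sqr_ge0 (b - alpha ^+ 2 * t).
have eq1 : alpha * (t - b) = c * u.
  apply/eqP; rewrite eq_le bel2 /=.
  nra.
have beq : b = alpha ^+ 2 * t.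
  have : (b - alpha ^+ 2 * t) ^+ 2 = 0.
    apply/eqP; rewrite eq_le hs andbT.
    have : (alpha * (t - b)) ^+ 2 - (c * u) ^+ 2 = 0 by rewrite eq1 subrr.
    lra.
  move/eqP; rewrite sqrf_eq0 subr_eq0 => /eqP //.
exists (- a, yT + t - b); split; last first.
  by rewrite /= beq; ring.
rewrite in_setE; split => //.
exists (u / alpha); split.
  by apply: divr_ge0 => //; apply: ltW.
have e2 : yT + t - b = yT + u / alpha * c.
  have -> : u / alpha * c = (c * u) / alpha by ring.
  rewrite -eq1; field; by rewrite gt_eqF.
have [al0|ag0] := leP a 0.
  left; rewrite -e2; congr (_, _).
  rewrite /u ler0_norm //; field; by rewrite gt_eqF.
right; rewrite -e2; congr (_, _).
rewrite /u gtr0_norm //; field; by rewrite gt_eqF.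
Qed.

Theorem lemma8 (R : realType) (alpha r xO yO yT : R) :
  0 < alpha < 1 -> 0 < r ->
  obs_disk r xO yO `<=` below_DL alpha yT ->
  (forall p q : R * R,
     p \in obs_disk r xO yO `&` decision_line alpha yT ->
     q \in obs_disk r xO yO `&` decision_line alpha yT -> p = q) ->
  optimal_obs_time alpha r xO yO yT = 0%E.
Proof.
move=> ha r0 below uniq.
have /andP[a0 a1] := ha.
have uniqT : forall psi, admissible psi -> forall t1 t2, 0 <= t1 ->
    dist2 alpha xO yO yT psi t1 <= r ^+ 2 -> 0 <= t2 ->
    dist2 alpha xO yO yT psi t2 <= r ^+ 2 -> t1 = t2.
  move=> psi hpsi t1 t2 h1 d1 h2 d2.
  have [P1 [P1i P1e]] := @contact R alpha r xO yO yT ha r0 below psi hpsi t1 h1 d1.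
  have [P2 [P2i P2e]] := @contact R alpha r xO yO yT ha r0 below psi hpsi t2 h2 d2.
  have e := uniq _ _ P1i P2i.
  rewrite e P2e in P1e.
  have k : 0 < 1 - alpha ^+ 2 by nra.
  apply: (mulfI (x:=1 - alpha ^+ 2)); first by rewrite gt_eqF.
  by rewrite P1e.
have tobs0 : forall psi, admissible psi -> tobs alpha r xO yO yT psi = 0%E.
  move=> psi hpsi; rewrite /tobs; case: ifPn => // hinf.
  have [[t0 [t0p t0d]] | nS] := pselect (exists t, 0 <= t /\ dist2 alpha xO yO yT psi t <= r ^+ 2).
    have T2 : t2 alpha r xO yO yT psi = t0%:E.
      rewrite /t2 -[RHS]ereal_inf1; congr ereal_inf; apply/seteqP; split => x /=.
        move=> [t [tp td] <-]; by rewrite (uniqT psi hpsi t t0).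
      by move=> ->; exists t0.
    have TF : tf alpha r xO yO yT psi = t0%:E.
      rewrite /tf T2; apply/eqP; rewrite eq_le; apply/andP; split.
        apply/lee_addgt0Pr => e e0; apply: ge_ereal_inf.
        exists (t0 + e)%:E; last by rewrite EFinD.
        exists (t0 + e) => //; split; first by rewrite lee_fin; lra.
        rewrite ltNge; apply/negP => hd.
        have := uniqT psi hpsi (t0 + e) t0 ltac:(lra) hd t0p t0d.
        lra.
      by apply: le_ereal_inf_tmp => x [t [h1 h2] <-].
    by rewrite TF T2 subee.
  exfalso; move: hinf; rewrite /t2.
  have -> : [set (t%:E)%E | t in [set t : R | 0 <= t /\ dist2 alpha xO yO yT psi t <= r ^+ 2]] = set0.
    by apply/seteqP; split => x //= [t st _]; apply: nS; exists t.
  by rewrite ereal_inf0 eqxx.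
rewrite /optimal_obs_time.
have -> : [set tobs alpha r xO yO yT psi | psi in @admissible R] = [set 0%E].
  apply/seteqP; split => x /=.
    by move=> [psi hp <-]; rewrite tobs0.
  have hc : admissible (fun _ : R => 0 : R) by exact: measurable_cst.
  by move=> ->; exists (fun _ => 0) => //; rewrite tobs0.
by rewrite ereal_sup1.
Qed.
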